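(* Let $\hat{\mathbf A}\in\mathbb R^{p\times r}$ and an orthogonal $\hat{\mathbf P}\in\mathbb R^{r\times r}$ be random with $(\hat{\mathbf A},\hat{\mathbf P})$ independent of $\{\omega_{ij}:i\in\mathcal N_2,j\in[p]\}$, and set $\mathbf A^*=\mathbf V_r^*\hat{\mathbf P}$, $\boldsymbol\Theta^*=\mathbf U_r^*\mathbf D_r^*\hat{\mathbf P}$. If $\|\mathbf U_r^*\mathbf D_r^*\|_{2\to\infty}\le C_1$ and $\|\hat{\mathbf A}\|_{2\to\infty},\|\mathbf V_r^*\|_{2\to\infty}\le C_2$, then with probability at least $1-1/n$, $$\max_{i\in\mathcal N_2}\beta_{1,i}(\hat{\mathbf A})\le C_1^2C_2\Big\{\pi_{\max}\|\hat{\mathbf A}-\mathbf A^*\|_F^2+4\pi_{\max}^{1/2}C_2(\log n)^{1/2}\|\hat{\mathbf A}-\mathbf A^*\|_F+4C_2^2\log n\Big\}.$$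
   Context: $\mathbf M^*\in\mathbb R^{n\times p}$ is deterministic of rank $r$ with compact SVD $\mathbf U_r^*\mathbf D_r^*(\mathbf V_r^* )^T$ ($\mathbf U_r^*,\mathbf V_r^*$ with orthonormal columns). The $\omega_{ij}\in\{0,1\}$ are independent Bernoulli$(\pi_{ij})$, $\pi_{\max}=\max\pi_{ij}$. $\mathcal N_2\subset[n]$ is fixed. With rows $\hat{\mathbf a}_j^T,\mathbf a_j^{*T},\boldsymbol\theta_i^{*T}$ of $\hat{\mathbf A},\mathbf A^*,\boldsymbol\Theta^*$: $\beta_{1,i}(\hat{\mathbf A})=\sup_{\|\mathbf u\|=1}\sum_{j=1}^p\omega_{ij}((\hat{\mathbf a}_j-\mathbf a_j^* )^T\boldsymbol\theta_i^* )^2|\hat{\mathbf a}_j^T\mathbf u|$. $\|\cdot\|_F$ Frobenius norm, $\|X\|_{2\to\infty}$ maximal row Euclidean norm. *)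

(* Defs.v *)
From HB Require Import structures.
From mathcomp Require Import all_boot all_order all_algebra.
From mathcomp Require Import all_classical all_reals all_analysis.
Set Implicit Arguments. Unset Strict Implicit. Unset Printing Implicit Defensive.
Import Order.TTheory GRing.Theory Num.Theory.
Local Open Scope classical_set_scope.
Local Open Scope ring_scope.

Section Defs.
Variable R : realType.

Definition vnorm (r : nat) (u : 'cV[R]_r) : R :=
  Num.sqrt (\sum_(k < r) u k 0 ^+ 2).

Definition frob (m q : nat) (X : 'M[R]_(m, q)) : R :=
  Num.sqrt (\sum_(i < m) \sum_(k < q) X i k ^+ 2).

Definition norm2inf (m q : nat) (X : 'M[R]_(m, q)) : R :=
  \big[Num.max/0]_(i < m) Num.sqrt (\sum_(k < q) X i k ^+ 2).

Definition beta1 (p r : nat) (w : 'I_p -> bool) (Ahat Astar : 'M[R]_(p, r))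
  (theta : 'rV[R]_r) : R :=
  sup [set s | exists u : 'cV[R]_r, vnorm u = 1 /\
    s = \sum_(j < p) (w j)%:R *
          (\sum_(k < r) (Ahat j k - Astar j k) * theta 0 k) ^+ 2 *
          `| \sum_(k < r) Ahat j k * u k 0 |].

Definition bern (pi : R) (b : bool) : R := if b then pi else 1 - pi.

Definition gen_AP d (T : measurableType d) (p r : nat)
  (Ahat : T -> 'M[R]_(p, r)) (Phat : T -> 'M[R]_r) : set (set T) :=
  [set E | exists B : set R, measurable B /\
     ((exists j k, E = [set t | B (Ahat t j k)]) \/
      (exists k l, E = [set t | B (Phat t k l)]))].

Definition sigma_AP d (T : measurableType d) (p r : nat)
  (Ahat : T -> 'M[R]_(p, r)) (Phat : T -> 'M[R]_r) : set (set T) :=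
  smallest (sigma_algebra setT) (gen_AP Ahat Phat).

End Defs.

(* Main.v *)
Require Import Defs.
From HB Require Import structures.
From mathcomp Require Import all_boot all_order all_algebra.
From mathcomp Require Import all_classical all_reals all_analysis.
From mathcomp Require Import ring lra measurable_realfun.
Import Order.TTheory GRing.Theory Num.Theory.
Local Open Scope classical_set_scope.
Local Open Scope ring_scope.

Section Helpers.
Local Set Implicit Arguments.
Local Unset Strict Implicit.

Lemma tanh_bound {R : realType} (y : R) : 0 <= y -> (2 - y) * expR y <= 2 + y.
Proof.
move=> y0; have [->|yp] := eqVneq y 0; first by rewrite expR0; lra.
have {yp}yp : 0 < y by rewrite lt_neqAle eq_sym yp.
pose f : R -> R := (fun x => 2 + x) - (fun x => 2 - x) * expR.
have df : forall x : R, is_derive x 1 f (1 - (1 - x) * expR x).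
  move=> x; apply: is_derive_eq; rewrite /GRing.scale /=; ring.
have cf : continuous (f : R^o -> R^o).
  move=> x; apply: differentiable_continuous; apply/derivable1_diffP.
 by case: (df x).
have [c] := MVT yp (fun x _ => df x) (continuous_subspaceT cf).
rewrite in_itv /= => /andP[c0 cy] h.
move: h; rewrite /f !fctE /= expR0 => h.
have hc : 0 <= 1 - (1 - c) * expR c.
  have := expR_ge1Dx (- c); rewrite expRN => hh.
  have ec := expR_gt0 c.
  have := ler_wpM2r (ltW ec) hh; rewrite mulVf ?gt_eqF //; lra.
have : 0 <= (1 - (1 - c) * expR c) * (y - 0) by apply: mulr_ge0 => //; lra.
rewrite -h; lra.
Qed.

Lemma expR_chord (R : realType) (t a : R) : 0 <= t -> t <= 1 ->
  expR (t * a) <= 1 - t + t * expR a.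
Proof.
move=> t0 t1.
have := @convex_expR R (Itv01 t0 t1) a 0.
rewrite !convRE /= expR0 /unstable.onem mulr0 addr0 mulr1 => h.
by rewrite addrC.
Qed.

Lemma exponent_ok (R : realType) (s l : R) : 0 <= s -> 0 <= l ->
  exists2 la : R, 0 <= la &
   - la * (s + l) ^+ 2 + s ^+ 2 * (expR la - 1) <= - 2 * l ^+ 2.
Proof.
move=> s0 l0; have [->|sn0] := eqVneq s 0.
  exists 2 => //; rewrite expr0n /= mul0r addr0 add0r; lra.
have sp : 0 < s by rewrite lt_neqAle eq_sym sn0.
pose w := (s + l) / s.
have w1 : 1 <= w by rewrite /w ler_pdivlMr // mul1r; lra.
have wp : 0 < w by lra.
pose y := ln w.
have y0 : 0 <= y by exact: ln_ge0.
have ey : expR y = w by rewrite /y lnK // posrE.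
exists (2 * y); first lra.
have e2 : expR (2 * y) = w ^+ 2 by rewrite -ey -expRM_natl.
rewrite e2.
have hb := @tanh_bound _ y y0; rewrite ey in hb.
have hws : w * s = s + l by rewrite /w mulfVK ?gt_eqF.
have hb' : 2 * l <= y * (2 * s + l).
  have := ler_wpM2r (ltW sp) hb.
  have -> : (2 - y) * w * s = (2 - y) * (s + l) by rewrite -mulrA hws.
  nra.
have -> : s ^+ 2 * (w ^+ 2 - 1) = (s + l) ^+ 2 - s ^+ 2.
  by rewrite mulrBr mulr1 -exprMn mulrC hws.
nra.
Qed.

Definition thr (R : realType) (pm C2 L Y : R) :=
  pm * Y + 4 * Num.sqrt pm * C2 * Num.sqrt L * Num.sqrt Y + 4 * C2 ^+ 2 * L.

Lemma thr_ge0 (R : realType) (pm C2 L Y : R) : 0 <= pm -> 0 <= C2 -> 0 <= L -> 0 <= Y ->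
  0 <= thr pm C2 L Y.
Proof.
move=> *; rewrite /thr; apply: addr_ge0; first apply: addr_ge0.
- exact: mulr_ge0.
- by rewrite !mulr_ge0.
- by rewrite !mulr_ge0 // exprn_ge0.
Qed.

Lemma row_chernoff (R : realType) (p : nat) (pi y : 'I_p -> R) (pm C2 L : R) :
  (forall j, 0 <= pi j <= 1) -> (forall j, pi j <= pm) -> 0 <= pm -> 0 <= C2 ->
  (forall j, 0 <= y j <= 4 * C2 ^+ 2) -> 0 <= L ->
  \sum_(c : {ffun 'I_p -> bool})
     (if thr pm C2 L (\sum_j y j) < \sum_j (c j)%:R * y j then 1 else 0)
     * \prod_j bern (pi j) (c j) <= expR (- 2 * L).
Proof.
move=> hpi hpm pm0 C20 hy L0.
set Y := \sum_j y j.
have Y0 : 0 <= Y by apply: sumr_ge0 => j _; case/andP: (hy j).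
have bern0 : forall (q : R) (b : bool), 0 <= q <= 1 -> 0 <= bern q b.
  by move=> q [] /andP[q0 q1]; rewrite /bern; lra.
have w0 : forall c : {ffun 'I_p -> bool}, 0 <= \prod_j bern (pi j) (c j).
  by move=> c; apply: prodr_ge0 => j _; apply: bern0.
have [C2z|C2n] := eqVneq C2 0.
  rewrite big1 ?expR_ge0 // => c _.
  have -> : \sum_j (c j)%:R * y j = 0.
    apply: big1 => j _; move: (hy j); rewrite C2z expr0n /= mulr0 => hyj.
    have -> : y j = 0 by lra.
    by rewrite mulr0.
  by rewrite ltNge thr_ge0 // mul0r.
have C2p : 0 < C2 by rewrite lt_neqAle eq_sym C2n.
set B := 4 * C2 ^+ 2.
have Bp : 0 < B by rewrite /B mulr_gt0 // exprn_gt0.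
set s := Num.sqrt pm * Num.sqrt Y / (2 * C2).
set l := Num.sqrt L.
have s0 : 0 <= s by rewrite /s !mulr_ge0 // invr_ge0 mulr_ge0.
have l0 : 0 <= l by exact: sqrtr_ge0.
have [la la0 hla] := exponent_ok s0 l0.
set lp := la / B.
have lp0 : 0 <= lp by rewrite /lp divr_ge0 // ltW.
have ss : s ^+ 2 = pm * Y / B.
  rewrite /s /B !exprMn !sqr_sqrtr // exprVn exprMn; field.
  by rewrite gt_eqF.
have ll : l ^+ 2 = L by rewrite /l sqr_sqrtr.
have hthr : thr pm C2 L Y = B * (s + l) ^+ 2.
  have pmY : pm * Y = (Num.sqrt pm * Num.sqrt Y) ^+ 2 by rewrite exprMn !sqr_sqrtr.
  rewrite /thr pmY /B /s -/l -ll; field; by rewrite gt_eqF.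
apply: (@le_trans _ _ (\sum_(c : {ffun 'I_p -> bool})
     expR (lp * (\sum_j (c j)%:R * y j - thr pm C2 L Y)) * \prod_j bern (pi j) (c j))).
  apply: ler_sum => c _; apply: ler_wpM2r => //.
  case: ifP => h; last exact: expR_ge0.
  apply: le_trans (expR_ge1Dx _); rewrite lerDl mulr_ge0 // subr_ge0 ltW //.
have -> : \sum_(c : {ffun 'I_p -> bool})
     expR (lp * (\sum_j (c j)%:R * y j - thr pm C2 L Y)) * \prod_j bern (pi j) (c j)
   = expR (- (lp * thr pm C2 L Y)) *
     \prod_j (\sum_(b : bool) expR (lp * (b%:R * y j)) * bern (pi j) b).
  rewrite bigA_distr_bigA /= mulr_sumr; apply: eq_bigr => c _.
  rewrite big_split /= mulrBr addrC expRD -mulrA; congr (_ * _).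
  by rewrite mulr_sumr expR_sum -big_split.
apply: (@le_trans _ _ (expR (- (lp * thr pm C2 L Y)) *
     \prod_j expR (pi j * (y j / B) * (expR la - 1)))).
  apply: ler_wpM2l; first exact: expR_ge0.
  apply: ler_prod => j _; apply/andP; split.
    rewrite big_bool /=; apply: addr_ge0; apply: mulr_ge0; rewrite ?expR_ge0 //; case/andP: (hpi j) => *; lra.

  rewrite big_bool /= mul1r mul0r mulr0 expR0 mul1r.
  case/andP: (hpi j) => pj0 pj1; case/andP: (hy j) => yj0 yjB.
  have t0 : 0 <= y j / B by rewrite divr_ge0 // ltW.
  have t1 : y j / B <= 1 by rewrite ler_pdivrMr // mul1r.
  have := expR_chord la t0 t1.
  have -> : (y j / B) * la = lp * y j by rewrite /lp mulrC mulrA mulrAC.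
  move=> hc.
  apply: le_trans (expR_ge1Dx _).
  have : pi j * expR (lp * y j) <= pi j * (1 - y j / B + y j / B * expR la).
    exact: ler_wpM2l.
  lra.
rewrite -expR_sum -expRD ler_expR.
apply: (@le_trans _ _ (- (lp * thr pm C2 L Y) + pm * Y / B * (expR la - 1))).
  rewrite lerD2l.
  have e0 : 0 <= expR la - 1 by rewrite subr_ge0 -expR0 ler_expR.
  rewrite -mulr_suml ler_wpM2r //.
  rewrite /Y mulr_sumr mulr_suml; apply: ler_sum => j _.
  case/andP: (hy j) => yj0 _.
  rewrite mulrA; apply: ler_wpM2r; first by rewrite invr_ge0 ltW.
  by apply: ler_wpM2r.
rewrite -ss hthr /lp -ll.
have -> : la / B * (B * (s + l) ^+ 2) = la * (s + l) ^+ 2.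
  by field; rewrite gt_eqF.
lra.
Qed.

Lemma bern0 (R : realType) (q : R) (b : bool) : 0 <= q <= 1 -> 0 <= bern q b.
Proof. by case: b => /andP[q0 q1]; rewrite /bern; lra. Qed.

Definition wrow (R : realType) (n p : nat) (pi : 'I_n -> 'I_p -> R) (N2 : {set 'I_n})
  (i : 'I_n) (c : {ffun 'I_p -> bool}) : R :=
  if i \in N2 then \prod_j bern (pi i j) (c j) else (c == [ffun=> false])%:R.

Definition Wcfg (R : realType) (n p : nat) (pi : 'I_n -> 'I_p -> R) (N2 : {set 'I_n})
  (b : {ffun 'I_n -> {ffun 'I_p -> bool}}) : R :=
  \prod_i wrow pi N2 i (b i).


Lemma sum_row (R : realType) (p : nat) (q : 'I_p -> R) :
  \sum_(c : {ffun 'I_p -> bool}) \prod_j bern (q j) (c j) = 1.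
Proof.
rewrite -(bigA_distr_bigA (fun j (b : bool) => bern (q j) b)) /=.
by apply: big1 => j _; rewrite big_bool /bern /=; ring.
Qed.

Lemma sum_wrow (R : realType) (n p : nat) (pi : 'I_n -> 'I_p -> R) (N2 : {set 'I_n}) i :
  \sum_c wrow pi N2 i c = 1.
Proof.
rewrite /wrow; case: (i \in N2); first exact: sum_row.
rewrite (bigD1 ([ffun=> false] : {ffun 'I_p -> bool})) //= eqxx big1 ?addr0 // => c /negPf ->.
by [].
Qed.

Lemma wrow_ge0 (R : realType) (n p : nat) (pi : 'I_n -> 'I_p -> R) (N2 : {set 'I_n}) i c :
  (forall i j, 0 <= pi i j <= 1) -> 0 <= wrow pi N2 i c.
Proof.
move=> hpi; rewrite /wrow; case: ifP => _; last exact: ler0n.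
by apply: prodr_ge0 => j _; apply: bern0.
Qed.

Lemma Wcfg_ge0 (R : realType) (n p : nat) (pi : 'I_n -> 'I_p -> R) (N2 : {set 'I_n}) b :
  (forall i j, 0 <= pi i j <= 1) -> 0 <= Wcfg pi N2 b.
Proof. by move=> hpi; apply: prodr_ge0 => i _; apply: wrow_ge0. Qed.

Lemma marginal (R : realType) (n p : nat) (pi : 'I_n -> 'I_p -> R) (N2 : {set 'I_n})
  (i0 : 'I_n) (f : {ffun 'I_p -> bool} -> R) : i0 \in N2 ->
  \sum_(b : {ffun 'I_n -> {ffun 'I_p -> bool}}) f (b i0) * Wcfg pi N2 b = \sum_(c : {ffun 'I_p -> bool}) f c * \prod_j bern (pi i0 j) (c j).
Proof.
move=> hi0.
pose F := fun i c => if i == i0 then f c * wrow pi N2 i c else wrow pi N2 i c.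
have -> : \sum_(b : {ffun 'I_n -> {ffun 'I_p -> bool}}) f (b i0) * Wcfg pi N2 b = \sum_(b : {ffun 'I_n -> {ffun 'I_p -> bool}}) \prod_i F i (b i).
  apply: eq_bigr => b _; rewrite /Wcfg (bigD1 i0) //= [RHS](bigD1 i0) //= /F eqxx mulrA.
  congr (_ * _); apply: eq_bigr => i /negPf hi; by rewrite hi.
rewrite -(bigA_distr_bigA F) /= (bigD1 i0) //= [X in _ * X]big1 ?mulr1.
  by apply: eq_bigr => c _; rewrite /F eqxx /wrow hi0.
by move=> i /negPf hi; rewrite /F hi sum_wrow.
Qed.

Lemma cfg_bound (R : realType) (n p : nat) (pi : 'I_n -> 'I_p -> R) (N2 : {set 'I_n})
  (y : 'I_p -> R) (pm C2 L : R) :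
  (forall i j, 0 <= pi i j <= 1) -> (forall i j, pi i j <= pm) -> 0 <= pm -> 0 <= C2 ->
  (forall j, 0 <= y j <= 4 * C2 ^+ 2) -> 0 <= L ->
  \sum_(b : {ffun 'I_n -> {ffun 'I_p -> bool}}) (if [exists i in N2, thr pm C2 L (\sum_j y j) < \sum_j (b i j)%:R * y j]
          then 1 else 0) * Wcfg pi N2 b <= #|N2|%:R * expR (- 2 * L).
Proof.
move=> hpi hpm pm0 C20 hy L0.
apply: (@le_trans _ _ (\sum_(b : {ffun 'I_n -> {ffun 'I_p -> bool}}) \sum_(i in N2)
   (if thr pm C2 L (\sum_j y j) < \sum_j (b i j)%:R * y j then 1 else 0) * Wcfg pi N2 b)).
  apply: ler_sum => b _; rewrite -mulr_suml; apply: ler_wpM2r; first exact: Wcfg_ge0.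
  case: existsP => [[i /andP[iN h]]|_]; last first.
    by apply: sumr_ge0 => i _; case: ifP.
  rewrite (bigD1 i) //= h lerDl; apply: sumr_ge0 => k _; by case: ifP.
rewrite exchange_big /=.
rewrite -sum1_card natr_sum mulr_suml; apply: ler_sum => i iN.
rewrite mul1r (@marginal _ _ _ _ _ i (fun c => if thr pm C2 L (\sum_j y j) < \sum_j (c j)%:R * y j then 1 else 0)) //.
by apply: row_chernoff.
Qed.

Section Gen.
Variables (R : realType) (d : measure_display) (T : measurableType d) (p r : nat)
  (Ahat : T -> 'M[R]_(p, r)) (Phat : T -> 'M[R]_r).
Let T' := g_sigma_algebraType (gen_AP Ahat Phat).

Lemma gen_meas_sigma (E : set T') : measurable E -> sigma_AP Ahat Phat E.
Proof. by []. Qed.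

Lemma Ahat_meas j k : measurable_fun (setT : set T') (fun t => Ahat t j k).
Proof.
move=> _ B mB; rewrite setTI; apply: sub_gen_smallest; exists B; split => //.
by left; exists j, k.
Qed.

Lemma Phat_meas k l : measurable_fun (setT : set T') (fun t => Phat t k l).
Proof.
move=> _ B mB; rewrite setTI; apply: sub_gen_smallest; exists B; split => //.
by right; exists k, l.
Qed.

Lemma sigma_AP_meas (hA : forall j k, measurable_fun setT (fun t => Ahat t j k))
  (hP : forall k l, measurable_fun setT (fun t => Phat t k l)) (E : set T) :
  sigma_AP Ahat Phat E -> measurable E.
Proof.
apply: smallest_sub; first exact: sigma_algebra_measurable.
move=> F [B [mB [[j [k ->]]|[k [l ->]]]]].
- by have := hA j k measurableT _ mB; rewrite setTI.
- by have := hP k l measurableT _ mB; rewrite setTI.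
Qed.
End Gen.

Definition Ys (R : realType) (T0 : Type) (p r : nat) (V : 'M[R]_(p, r))
  (A : T0 -> 'M[R]_(p, r)) (Q : T0 -> 'M[R]_r) (t : T0) (j : 'I_p) : R :=
  \sum_k ((A t - V *m Q t) j k) ^+ 2.

Section Meas.
Variables (R : realType) (d : measure_display) (T0 : measurableType d) (p r : nat)
  (V : 'M[R]_(p, r)) (A : T0 -> 'M[R]_(p, r)) (Q : T0 -> 'M[R]_r).
Hypothesis hA : forall j k, measurable_fun setT (fun t => A t j k).
Hypothesis hQ : forall k l, measurable_fun setT (fun t => Q t k l).

Lemma Ys_meas j : measurable_fun setT (fun t => Ys V A Q t j).
Proof.
rewrite /Ys; apply: measurable_sum => k.
have -> : (fun t => ((A t - V *m Q t) j k) ^+ 2) =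
   (fun t => (A t j k - \sum_l V j l * Q t l k) ^+ 2).
  by apply: funext => t; rewrite !mxE.
apply: measurable_funX; apply: measurable_funB => //.
apply: measurable_sum => l; apply: measurable_funM => //.
Qed.

Lemma Ysum_meas : measurable_fun setT (fun t => \sum_j Ys V A Q t j).
Proof. by apply: measurable_sum => j; exact: Ys_meas. Qed.

Lemma sqrt_meas (f : T0 -> R) : measurable_fun setT f ->
  measurable_fun setT (fun t => Num.sqrt (f t)).
Proof.
move=> mf.
have hs : measurable_fun setT (@Num.sqrt R).
  apply: continuous_measurable_fun; exact: sqrt_continuous.
exact: (measurableT_comp hs mf).
Qed.

Lemma thr_meas pm C2 L : measurable_fun setT (fun t => thr pm C2 L (\sum_j Ys V A Q t j)).
Proof.
rewrite /thr; apply: measurable_funD; last exact: measurable_cst.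
apply: measurable_funD; first by apply: measurable_funM; [exact: measurable_cst|exact: Ysum_meas].
apply: measurable_funM; first exact: measurable_cst.
apply: sqrt_meas; exact: Ysum_meas.
Qed.

Lemma lt_set_meas (f g : T0 -> R) : measurable_fun setT f -> measurable_fun setT g ->
  measurable [set t | f t < g t].
Proof.
move=> mf mg; have mt : measurable [set true] by [].
have := measurable_fun_ltr mf mg measurableT mt.
rewrite setTI; congr measurable; apply/seteqP; split=> t /=; by case: (f t < g t).
Qed.

Lemma exists_seq_meas (I : eqType) (s : seq I) (P : I -> set T0) :
  (forall i, measurable (P i)) -> measurable [set t | exists i, i \in s /\ P i t].
Proof.
move=> mP; elim: s => [|h s ih].
  by rewrite (_ : [set t | _] = set0) //; apply/seteqP; split => t //= [i []].
rewrite (_ : [set t | _] = P h `|` [set t | exists i, i \in s /\ P i t]).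
  exact: measurableU.
apply/seteqP; split => t /=.
  move=> [i []]; rewrite inE => /orP[/eqP -> | his] Pi; [by left|by right; exists i].
case=> [Ph|[i [his Pi]]]; first by exists h; rewrite mem_head.
by exists i; rewrite inE his orbT.
Qed.
End Meas.

Lemma cs_sq (R : realType) (r : nat) (a b : 'I_r -> R) :
  (\sum_k a k * b k) ^+ 2 <= (\sum_k a k ^+ 2) * (\sum_k b k ^+ 2).
Proof.
set A := \sum_k a k ^+ 2; set B := \sum_k b k ^+ 2; set X := \sum_k a k * b k.
have B0 : 0 <= B by apply: sumr_ge0 => k _; exact: sqr_ge0.
have A0 : 0 <= A by apply: sumr_ge0 => k _; exact: sqr_ge0.
have [Bz|Bn] := eqVneq B 0.
  have bz : forall k, b k = 0.
    move=> k; apply/eqP; rewrite -sqrf_eq0; apply/eqP.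
    by move/eqP: Bz; rewrite psumr_eq0 => [/allP /(_ k (mem_index_enum _)) /implyP /(_ isT) /eqP|j _]; [|exact: sqr_ge0].
  have -> : X = 0 by rewrite /X big1 // => k _; rewrite bz mulr0.
  by rewrite expr0n /= mulr_ge0.
have Bp : 0 < B by rewrite lt_neqAle eq_sym Bn.
have h : 0 <= \sum_k (B * a k - X * b k) ^+ 2 by apply: sumr_ge0 => k _; exact: sqr_ge0.
have e : \sum_k (B * a k - X * b k) ^+ 2 = B * (A * B - X ^+ 2).
  have -> : \sum_k (B * a k - X * b k) ^+ 2 =
     \sum_k (B ^+ 2 * a k ^+ 2 - (2 * B * X) * (a k * b k) + X ^+ 2 * b k ^+ 2).
    by apply: eq_bigr => k _; ring.
  rewrite big_split /= sumrB -!mulr_sumr -/A -/B -/X; ring.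
rewrite e in h.
have : 0 <= A * B - X ^+ 2 by rewrite -(pmulr_rge0 _ Bp).
lra.
Qed.

Lemma cs_abs (R : realType) (r : nat) (a b : 'I_r -> R) :
  `|\sum_k a k * b k| <= Num.sqrt (\sum_k a k ^+ 2) * Num.sqrt (\sum_k b k ^+ 2).
Proof.
rewrite -sqrtrM; last by apply: sumr_ge0 => k _; exact: sqr_ge0.
rewrite -sqrtr_sqr ler_sqrt; first exact: cs_sq.
by apply: mulr_ge0; apply: sumr_ge0 => k _; exact: sqr_ge0.
Qed.

Lemma orth_row (R : realType) (r : nat) (x : 'rV[R]_r) (Q : 'M[R]_r) :
  Q *m Q^T = 1%:M -> \sum_k ((x *m Q) 0 k) ^+ 2 = \sum_k (x 0 k) ^+ 2.
Proof.
move=> hQ.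
have sq : forall y : 'rV[R]_r, \sum_k (y 0 k) ^+ 2 = (y *m y^T) 0 0.
  by move=> y; rewrite mxE; apply: eq_bigr => k _; rewrite mxE expr2.
by rewrite !sq trmx_mul mulmxA -(mulmxA x) hQ mulmx1.
Qed.

Lemma norm2inf_ge0 (R : realType) (m q : nat) (X : 'M[R]_(m, q)) : 0 <= norm2inf X.
Proof.
rewrite /norm2inf; elim/big_ind: _ => // x y hx hy.
by rewrite le_max hx.
Qed.

Lemma row_le_norm2inf (R : realType) (m q : nat) (X : 'M[R]_(m, q)) i :
  \sum_k (X i k) ^+ 2 <= norm2inf X ^+ 2.
Proof.
have h : Num.sqrt (\sum_k (X i k) ^+ 2) <= norm2inf X.
  rewrite /norm2inf; exact: le_bigmax.
rewrite -(sqr_sqrtr (a := \sum_k _)); last by apply: sumr_ge0 => k _; exact: sqr_ge0.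
by rewrite ler_pXn2r // ?nnegrE ?sqrtr_ge0 ?norm2inf_ge0.
Qed.

Lemma beta1_bound (R : realType) (p r : nat) (w : 'I_p -> bool) (Ah As : 'M[R]_(p, r))
  (th : 'rV[R]_r) (C1 C2 : R) :
  \sum_k (th 0 k) ^+ 2 <= C1 ^+ 2 -> (forall j, \sum_k (Ah j k) ^+ 2 <= C2 ^+ 2) -> 0 <= C2 ->
  beta1 w Ah As th <= C1 ^+ 2 * C2 * \sum_j (w j)%:R * \sum_k (Ah j k - As j k) ^+ 2.
Proof.
move=> hth hAh C20.
set M := C1 ^+ 2 * C2 * _.
have M0 : 0 <= M.
  apply: mulr_ge0; first by apply: mulr_ge0 => //; exact: sqr_ge0.
  apply: sumr_ge0 => j _; apply: mulr_ge0; first exact: ler0n.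
  by apply: sumr_ge0 => k _; exact: sqr_ge0.
rewrite /beta1; set S := [set s | _].
have ub : ubound S M.
  move=> s [u [nu ->]].
  rewrite /M mulr_sumr; apply: ler_sum => j _.
  set D := \sum_k (Ah j k - As j k) ^+ 2.
  have hX : (\sum_k (Ah j k - As j k) * th 0 k) ^+ 2 <= D * C1 ^+ 2.
    apply: le_trans (cs_sq _ _) _; rewrite ler_wpM2l //.
    by apply: sumr_ge0 => k _; exact: sqr_ge0.
  have hY : `|\sum_k Ah j k * u k 0| <= C2.
    apply: le_trans (cs_abs _ _) _.
    have -> : Num.sqrt (\sum_k u k 0 ^+ 2) = 1 by exact: nu.
    rewrite mulr1 -(ger0_norm C20) -sqrtr_sqr ler_sqrt //; exact: sqr_ge0.
  have w0 : 0 <= (w j)%:R :> R by exact: ler0n.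
  have X0 : 0 <= (\sum_k (Ah j k - As j k) * th 0 k) ^+ 2 by exact: sqr_ge0.
  have := ler_pM (mulr_ge0 w0 X0) (normr_ge0 _) (ler_wpM2l w0 hX) hY.
  move=> h; apply: le_trans h _.
  by rewrite (_ : (w j)%:R * (D * C1 ^+ 2) * C2 = C1 ^+ 2 * C2 * ((w j)%:R * D)); last ring.
have [[s Ss]|Sn] := pselect (exists s, S s).
  by apply: ge_sup => //; exists s.
have -> : S = set0 by apply/seteqP; split => x // Sx; exfalso; apply: Sn; exists x.
by rewrite sup0.
Qed.

Lemma int_sum_indic d (T : measurableType d) (R : realType) (mu : {measure set T -> \bar R})
  (I : finType) (k : I -> R) (A : I -> set T) :
  (forall i, 0 <= k i) -> (forall i, measurable (A i)) ->
  (\int[mu]_t (\sum_i k i * \1_(A i) t)%:E = \sum_i (k i)%:E * mu (A i))%E.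
Proof.
move=> k0 mA.
rewrite (eq_integral (fun t => \sum_i (k i * \1_(A i) t)%:E)%E); last first.
  by move=> t _; rewrite sumEFin.
rewrite ge0_integral_sum //; last first.
- by move=> i t _; rewrite lee_fin mulr_ge0.
- move=> i; apply/measurable_EFinP; apply: measurable_funM; first exact: measurable_cst.
  exact: measurable_indic.
apply: eq_bigr => i _.
rewrite (eq_integral (fun t => (k i)%:E * (\1_(A i) t)%:E)%E); last by move=> t _; rewrite EFinM.
rewrite ge0_integralZl_EFin //; last first.
  by apply/measurable_EFinP; exact: measurable_indic.
by rewrite integral_indic ?setIT.
Qed.

Lemma meas_sum_indic d (T : measurableType d) (R : realType)
  (I : finType) (k : I -> R) (A : I -> set T) : (forall i, measurable (A i)) ->
  measurable_fun setT (fun t => (\sum_i k i * \1_(A i) t)%:E).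
Proof.
move=> mA; apply/measurable_EFinP; apply: measurable_sum => i.
apply: measurable_funM; first exact: measurable_cst.
exact: measurable_indic.
Qed.

End Helpers.

Theorem mainTheorem14
  (R : realType) (d : measure_display) (T : measurableType d)
  (P : probability T R)
  (n p r : nat)
  (* deterministic M* of rank r with compact SVD U D V^T *)
  (Mstar : 'M[R]_(n, p)) (U : 'M[R]_(n, r)) (D : 'M[R]_r) (V : 'M[R]_(p, r))
  (hUo : U^T *m U = 1%:M) (hVo : V^T *m V = 1%:M)
  (hDdiag : forall k l : 'I_r, k != l -> D k l = 0)
  (hDpos : forall k : 'I_r, 0 < D k k)
  (hDord : forall k l : 'I_r, (k <= l)%N -> D l l <= D k k)
  (hM : Mstar = U *m D *m V^T)
  (hrank : \rank Mstar = r)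
  (* observation indicators omega_ij ~ Bernoulli(pi_ij), independent *)
  (pi : 'I_n -> 'I_p -> R)
  (hpi : forall i j, 0 <= pi i j <= 1)
  (omega : 'I_n -> 'I_p -> T -> bool)
  (homega_meas : forall i j (b : bool), measurable [set t | omega i j t = b])
  (homega_ind : forall b : 'I_n -> 'I_p -> bool,
     P [set t | forall i j, omega i j t = b i j] =
     (\prod_(i < n) \prod_(j < p) bern (pi i j) (b i j))%:E)
  (N2 : {set 'I_n})
  (* random Ahat and orthogonal Phat *)
  (Ahat : T -> 'M[R]_(p, r)) (Phat : T -> 'M[R]_r)
  (hAmeas : forall j k, measurable_fun setT (fun t => Ahat t j k))
  (hPmeas : forall k l, measurable_fun setT (fun t => Phat t k l))
  (hPorth : forall t, Phat t *m (Phat t)^T = 1%:M)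
  (* (Ahat, Phat) independent of {omega_ij : i in N2, j in [p]} *)
  (hind : forall (E : set T) (b : 'I_n -> 'I_p -> bool),
     sigma_AP Ahat Phat E ->
     P (E `&` [set t | forall i j, i \in N2 -> omega i j t = b i j]) =
     (P E * (\prod_(i in N2) \prod_(j < p) bern (pi i j) (b i j))%:E)%E)
  (C1 C2 : R)
  (hC1 : norm2inf (U *m D) <= C1)
  (hC2A : forall t, norm2inf (Ahat t) <= C2)
  (hC2V : norm2inf V <= C2) :
  let pimax := \big[Num.max/0]_(i < n) \big[Num.max/0]_(j < p) pi i j in
  let Astar := fun t => V *m Phat t in
  let Theta := fun t => U *m D *m Phat t in
  exists E : set T, measurable E /\
    ((1 - n%:R^-1)%:E <= P E)%E /\
    (forall t, E t ->
       \big[Num.max/0]_(i in N2)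
          beta1 (fun j => omega i j t) (Ahat t) (Astar t) (row i (Theta t))
       <= C1 ^+ 2 * C2 *
          (pimax * frob (Ahat t - Astar t) ^+ 2
           + 4 * Num.sqrt pimax * C2 * Num.sqrt (ln n%:R) * frob (Ahat t - Astar t)
           + 4 * C2 ^+ 2 * ln n%:R)).
Proof.
move=> pimax Astar Theta.
set L := ln n%:R.
have L0 : 0 <= L.
  rewrite /L; have [->|n0] := eqVneq n 0%N; first by rewrite ln0.
  by apply: ln_ge0; rewrite ler1n lt0n.
have C20 : 0 <= C2 := le_trans (norm2inf_ge0 V) hC2V.
have pm0 : 0 <= pimax.
  rewrite /pimax; elim/big_ind: _ => // [x y hx hy|i _]; first by rewrite le_max hx.
  elim/big_ind: _ => // [x y hx hy|j _]; first by rewrite le_max hx.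
  by case/andP: (hpi i j).
have hpm : forall i j, pi i j <= pimax.
  move=> i j; apply: le_trans (le_bigmax _ _ i).
  exact: le_bigmax.
pose Y t j := Ys V Ahat Phat t j.
pose Th t := thr pimax C2 L (\sum_j Y t j).
have sqr_le : forall a b : R, 0 <= a -> a <= b -> a ^+ 2 <= b ^+ 2.
  by move=> a b a0 ab; rewrite ler_pXn2r // nnegrE // (le_trans a0 ab).
have orth_sum : forall (m : nat) (M : 'M[R]_(m, r)) t j,
    \sum_k ((M *m Phat t) j k) ^+ 2 = \sum_k (M j k) ^+ 2.
  move=> m M t j.
  have -> : \sum_k ((M *m Phat t) j k) ^+ 2 = \sum_k ((row j M *m Phat t) 0 k) ^+ 2.
    by apply: eq_bigr => k _; rewrite -row_mul [X in _ = X ^+ 2]mxE.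
  by rewrite (orth_row _ (hPorth t)); apply: eq_bigr => k _; rewrite mxE.
have subE : forall (X Z : 'M[R]_(p, r)) j k, (X - Z) j k = X j k - Z j k.
  by move=> X Z j k; rewrite !mxE.
have Ybnd : forall t j, 0 <= Y t j <= 4 * C2 ^+ 2.
  move=> t j; apply/andP; split; first by apply: sumr_ge0 => k _; exact: sqr_ge0.
  apply: (@le_trans _ _ (\sum_k (2 * (Ahat t j k) ^+ 2 + 2 * ((V *m Phat t) j k) ^+ 2))).
    apply: ler_sum => k _; rewrite subE.
    have := sqr_ge0 (Ahat t j k + (V *m Phat t) j k); nra.
  rewrite big_split /= -!mulr_sumr orth_sum.
  have h1 := le_trans (row_le_norm2inf (Ahat t) j) (sqr_le _ _ (norm2inf_ge0 _) (hC2A t)).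
  have h2 := le_trans (row_le_norm2inf V j) (sqr_le _ _ (norm2inf_ge0 _) hC2V).
  lra.
have omega_meas : forall i j, measurable_fun setT (fun t => ((omega i j t)%:R : R)).
  move=> i j.
  have -> : (fun t => ((omega i j t)%:R : R)) = \1_[set t | omega i j t = true].
    apply: funext => t; rewrite indicE.
    case h: (omega i j t); [by rewrite mem_set | by rewrite memNset //= h].

  exact: measurable_indic.
pose F := [set t | exists i, i \in enum N2 /\ Th t < \sum_j (omega i j t)%:R * Y t j].
have mF : measurable F.
  apply: exists_seq_meas => i; apply: lt_set_meas.
    exact: thr_meas.
  apply: measurable_sum => j; apply: measurable_funM; first exact: omega_meas.
  exact: Ys_meas.
exists (~` F); split; first exact: measurableC.
split.
  rewrite probability_setC //.
  have cn : #|N2|%:R * expR (- 2 * L) <= n%:R^-1.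
    have cN : (#|N2| <= n)%N by have := max_card N2; rewrite card_ord.
    have [n0|n0] := eqVneq n 0%N.
      have : (#|N2| <= 0)%N := leq_trans cN (eq_leq n0).
      rewrite leqn0 => /eqP ->; rewrite mul0r.
      by have -> : n%:R^-1 = 0 :> R by rewrite n0 invr0.
    have np : 0 < n%:R :> R by rewrite ltr0n lt0n.
    rewrite mulNr expRN expRM_natl /L lnK ?posrE //.
    apply: (@le_trans _ _ (n%:R * (n%:R ^+ 2)^-1)).
      by rewrite ler_wpM2r ?invr_ge0 ?exprn_ge0 ?ler0n // ler_nat.
    by rewrite expr2 invfM mulrA divff ?gt_eqF // mul1r.
  have key : (P F <= (#|N2|%:R * expR (- 2 * L))%:E)%E.
    pose Qb (b : {ffun 'I_n -> {ffun 'I_p -> bool}}) :=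
      [forall i, (i \notin N2) ==> (b i == [ffun=> false])].
    pose Om (b : {ffun 'I_n -> {ffun 'I_p -> bool}}) :=
      [set t | forall i j, i \in N2 -> omega i j t = b i j].
    pose G (b : {ffun 'I_n -> {ffun 'I_p -> bool}}) :=
      [set t | [exists i in N2, Th t < \sum_j (b i j)%:R * Y t j]].
    pose W' (b : {ffun 'I_n -> {ffun 'I_p -> bool}}) :=
      \prod_(i in N2) \prod_(j < p) bern (pi i j) (b i j).
    have mOm : forall b, measurable (Om b).
      move=> b.
      have -> : Om b = ~` [set t | exists ij, ij \in enum [pred ij : 'I_n * 'I_p | ij.1 \in N2]
          /\ [set t | omega ij.1 ij.2 t = ~~ b ij.1 ij.2] t].
        apply/seteqP; split => t /=.
          move=> h [[i j] []]; rewrite mem_enum /= => iN.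
          by rewrite (h i j iN); case: (b i j).
        move=> h i j iN; apply/eqP; apply: contraT => hne; exfalso; apply: h; exists (i, j).
        split; first by rewrite mem_enum.
        by move: hne; case: (omega i j t); case: (b i j).
      apply: measurableC; apply: exists_seq_meas => ij; exact: homega_meas.
    have sG : forall b, sigma_AP Ahat Phat (G b).
      move=> b; apply: gen_meas_sigma.
      have -> : G b = [set t | exists i, i \in enum N2 /\
          [set t | Th t < \sum_j (b i j)%:R * Y t j] t].
        apply/seteqP; split => t /=.
          by move=> /existsP [i /andP [iN h]]; exists i; rewrite mem_enum.
        by move=> [i []]; rewrite mem_enum => iN h; apply/existsP; exists i; rewrite iN h.
      apply: exists_seq_meas => i; apply: lt_set_meas.
        by apply: thr_meas => [j k|k l]; [exact: Ahat_meas|exact: Phat_meas].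
      apply: measurable_sum => j; apply: measurable_funM; first exact: measurable_cst.
      by apply: Ys_meas => [j' k|k l]; [exact: Ahat_meas|exact: Phat_meas].
    have mG : forall b, measurable (G b) := fun b => sigma_AP_meas hAmeas hPmeas (sG b).
    have QW : forall b, (Qb b)%:R * W' b = Wcfg pi N2 b.
      move=> b; rewrite /Wcfg (bigID (fun i => i \in N2)) /=.
      have -> : \prod_(i | i \in N2) wrow pi N2 i (b i) = W' b.
        by apply: eq_bigr => i iN; rewrite /wrow iN.
      case: (boolP (Qb b)) => hQ.
        rewrite [X in _ = _ * X]big1 ?mul1r ?mulr1 // => i hi.
        move/forallP: hQ => /(_ i); rewrite hi /= => /eqP ->.
        by rewrite /wrow (negbTE hi) eqxx.

      move: hQ; rewrite negb_forall => /existsP [i]; rewrite negb_imply => /andP [hi hbi].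
      by rewrite [X in _ = _ * X](bigD1 i) //= /wrow (negbTE hi) (negbTE hbi) !mul0r mulr0.
    have -> : P F = P (F `&` setT) by rewrite setIT.
    rewrite -integral_indic //.
    apply: (@le_trans _ _ (\int[P]_t (\sum_(b : {ffun 'I_n -> {ffun 'I_p -> bool}})
        (Qb b)%:R * \1_(Om b `&` G b) t)%:E)%E).
      apply: ge0_le_integral => //.
      - by apply/measurable_EFinP; exact: measurable_indic.
      - by apply: meas_sum_indic => b; exact: measurableI.
      move=> t _; rewrite lee_fin.
      rewrite indicE; case: (boolP (t \in F)) => tF; last first.
        by apply: sumr_ge0 => b _; rewrite mulr_ge0 // indicE.
      move: tF; rewrite in_setE => -[i [iN hi]].
      pose bt : {ffun 'I_n -> {ffun 'I_p -> bool}} :=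
        [ffun i => if i \in N2 then [ffun j => omega i j t] else [ffun=> false]].
      rewrite (bigD1 bt) //=.
      have Qbt : Qb bt.
        by apply/forallP => i'; apply/implyP => hi'; rewrite ffunE (negbTE hi').
      rewrite mem_enum in iN.
      have Obt : (Om bt `&` G bt) t.
        split; first by move=> i' j iN'; rewrite ffunE iN' ffunE.
        apply/existsP; exists i; rewrite iN /=.
        rewrite (eq_bigr (fun j => (omega i j t)%:R * Y t j)) // => j _.
        by rewrite ffunE iN ffunE.
      rewrite Qbt indicE mem_set // mul1r lerDl.
      by apply: sumr_ge0 => b _; rewrite mulr_ge0 // indicE.
    rewrite int_sum_indic //; last by move=> b; exact: measurableI.
    have step : forall b, ((Qb b)%:R%:E * P (Om b `&` G b) = (Wcfg pi N2 b)%:E * P (G b))%E.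
      move=> b; rewrite setIC (hind (G b) (fun i j => b i j) (sG b)).
      by rewrite muleCA -EFinM QW muleC.
    rewrite (eq_bigr _ (fun b _ => step b)) -int_sum_indic //; last first.
      by move=> b; exact: Wcfg_ge0.
    apply: (@le_trans _ _ (\int[P]_t (cst (#|N2|%:R * expR (- 2 * L))%:E t))%E).
      apply: ge0_le_integral => //.
      - move=> t _; rewrite lee_fin; apply: sumr_ge0 => b _; apply: mulr_ge0.
          exact: Wcfg_ge0.
        by rewrite indicE.
      - exact: meas_sum_indic.
      move=> t _; rewrite lee_fin.
      have := @cfg_bound _ _ _ pi N2 (Y t) pimax C2 L hpi hpm pm0 C20 (Ybnd t) L0.
      apply: le_trans; rewrite le_eqVlt; apply/orP; left; apply/eqP.
      apply: eq_bigr => b _; rewrite mulrC indicE; congr (_ * _).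
      by case: ifP => h; [rewrite mem_set //; rewrite /G /= h | rewrite memNset //; rewrite /G /= h].
    by rewrite integral_cst // -[X in (_ * X)%E]/(P setT) probability_setT mule1.
  rewrite EFinB; apply: leeB => //.
  by apply: le_trans key _; rewrite lee_fin.
move=> t Ft.
have hS : forall i, i \in N2 -> \sum_j (omega i j t)%:R * Y t j <= Th t.
  move=> i iN; rewrite leNgt; apply/negP => h; apply: Ft; exists i.
  by rewrite mem_enum.
have frobE : frob (Ahat t - Astar t) = Num.sqrt (\sum_j Y t j) by [].
have Y0 : 0 <= \sum_j Y t j by apply: sumr_ge0 => j _; case/andP: (Ybnd t j).
rewrite frobE sqr_sqrtr // -/L.
have -> : pimax * \sum_j Y t j + 4 * Num.sqrt pimax * C2 * Num.sqrt L * Num.sqrt (\sum_j Y t j) +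
    4 * C2 ^+ 2 * L = Th t by [].
have K0 : 0 <= C1 ^+ 2 * C2 by rewrite mulr_ge0 // sqr_ge0.
apply: bigmax_le; first by rewrite mulr_ge0 // thr_ge0.
move=> i iN.
have H1 : \sum_k (row i (Theta t) 0 k) ^+ 2 <= C1 ^+ 2.
  rewrite (eq_bigr (fun k => ((U *m D *m Phat t) i k) ^+ 2)); last by move=> k _; rewrite mxE.
  rewrite orth_sum; apply: le_trans (row_le_norm2inf _ i) _.
  by apply: sqr_le => //; exact: norm2inf_ge0.
have H2 : forall j, \sum_k (Ahat t j k) ^+ 2 <= C2 ^+ 2.
  move=> j; apply: le_trans (row_le_norm2inf _ j) _.
  by apply: sqr_le => //; exact: norm2inf_ge0.
apply: le_trans (@beta1_bound _ _ _ (fun j => omega i j t) (Ahat t) (Astar t) (row i (Theta t)) C1 C2 H1 H2 C20) _.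
apply: ler_wpM2l => //.
apply: le_trans (hS i iN); rewrite le_eqVlt; apply/orP; left; apply/eqP.
by apply: eq_bigr => j _; congr (_ * _); apply: eq_bigr => k _; rewrite subE.
Qed.
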